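(* Let $M$ be a matroid of rank $3$ on $[n]$. If $M$ has no parallel elements, then $M$ is DJS. In particular, every simple matroid of rank $3$ is DJS.
   Context: A rank-$3$ matroid $M$ on $[n]$ is called DJS if, letting $E$ be the set of non-loop elements of $M$, every linear ordering $w_1w_2\cdots w_m$ of $E$ has three consecutive elements $\{w_j,w_{j+1},w_{j+2}\}$ forming a basis of $M$. (Equivalently, the diagonal arrangement $\{U_{ijk}:\{i,j,k\}\text{ a basis}\}$ restricted to the non-loop coordinates meets every chamber of the braid arrangement in a codimension-2 subcomplex.) A matroid is simple if it has no loops and no parallel elements. *)

(* Defs.v *)
From mathcomp Require Import all_boot.
Set Implicit Arguments. Unset Strict Implicit. Unset Printing Implicit Defensive.

Definition matroid_bases (n : nat) (B : {set {set 'I_n}}) : Prop :=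
  B != set0 /\
  forall B1 B2, B1 \in B -> B2 \in B ->
    forall x, x \in B1 :\: B2 ->
      exists2 y, y \in B2 :\: B1 & (B1 :\ x) :|: [set y] \in B.

Definition rank3_matroid (n : nat) (B : {set {set 'I_n}}) : Prop :=
  matroid_bases B /\ forall X, X \in B -> #|X| = 3.

Definition indep (n : nat) (B : {set {set 'I_n}}) (X : {set 'I_n}) : bool :=
  [exists Y in B, X \subset Y].

Definition is_loop (n : nat) (B : {set {set 'I_n}}) (e : 'I_n) : bool :=
  ~~ indep B [set e].

Definition parallel (n : nat) (B : {set {set 'I_n}}) (e f : 'I_n) : bool :=
  [&& e != f, ~~ is_loop B e, ~~ is_loop B f & ~~ indep B [set e; f]].

Definition no_parallel (n : nat) (B : {set {set 'I_n}}) : Prop :=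
  forall e f : 'I_n, ~~ parallel B e f.

Definition simple_matroid (n : nat) (B : {set {set 'I_n}}) : Prop :=
  (forall e : 'I_n, ~~ is_loop B e) /\ no_parallel B.

(* DJS: every linear ordering w_1 ... w_m of the non-loop elements E
   (a duplicate-free sequence whose elements are exactly E) has three
   consecutive elements forming a basis. *)
Definition DJS (n : nat) (B : {set {set 'I_n}}) : Prop :=
  forall w : seq 'I_n,
    uniq w -> (forall e, (e \in w) = ~~ is_loop B e) ->
    exists2 j : nat, j.+2 < size w &
      [exists e0 : 'I_n,
        [set nth e0 w j; nth e0 w j.+1; nth e0 w j.+2] \in B].

(* Main.v *)
Require Import Defs.
From mathcomp Require Import all_boot.
From mathcomp Require Import zify.
From Stdlib Require Import Classical.
Set Implicit Arguments. Unset Strict Implicit.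

Ltac bools := repeat match goal with |- context [?x == ?y] => case: (x == y) end.

Lemma card3_neq (n : nat) (a b c : 'I_n) :
  #|[set a; b; c]| = 3 -> [/\ a != b, a != c & b != c].
Proof.
move=> H; split; apply/negP => /eqP E; subst.
- have E : [set b; b; c] = [set b; c] by apply/setP => t; rewrite !inE; bools.
  by move: H; rewrite E cards2; case: (b != c).
- have E : [set c; b; c] = [set b; c] by apply/setP => t; rewrite !inE; bools.
  by move: H; rewrite E cards2; case: (b != c).
- have E : [set a; c; c] = [set a; c] by apply/setP => t; rewrite !inE; bools.
  by move: H; rewrite E cards2; case: (a != c).
Qed.

Lemma card3_ext (n : nat) (Y : {set 'I_n}) (b c : 'I_n) :
  #|Y| = 3 -> b \in Y -> c \in Y -> b != c ->
  exists y, [/\ y != b, y != c & Y = [set b; c; y]].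
Proof.
move=> HY bY cY bc.
have sub : [set b; c] \subset Y by rewrite subUset !sub1set bY cY.
have : #|Y :\: [set b; c]| = 1.
  by rewrite cardsD (setIidPr sub) cards2 bc HY.
move/eqP/cards1P => [y Ey].
have yY : y \in Y :\: [set b; c] by rewrite Ey set11.
move: (yY); rewrite !inE => /andP [/norP [yb yc] _].
exists y; split => //.
apply/setP => t; rewrite !inE.
case tb: (t == b); first by rewrite (eqP tb) bY.
case tc: (t == c); first by rewrite (eqP tc) cY.
move/setP: Ey => /(_ t); rewrite !inE tb tc /=.
by move=> ->.
Qed.

Lemma keyK (n : nat) (B : {set {set 'I_n}}) :
  matroid_bases B -> (forall X, X \in B -> #|X| = 3) ->
  forall a b c d : 'I_n, [set a; b; d] \in B -> [set a; b; c] \notin B ->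
  indep B [set b; c] -> b != c -> [set b; c; d] \in B.
Proof.
move=> [_ Bex] B3 a b c d H1 H2 /existsP [Y /andP [YB sY]] bc.
have [ab ad bd] := card3_neq (B3 _ H1).
have bY : b \in Y by apply: (subsetP sY); rewrite !inE eqxx.
have cY : c \in Y by apply: (subsetP sY); rewrite !inE eqxx orbT.
have [y [yb yc EY]] := card3_ext (B3 _ YB) bY cY bc.
case yd: (y == d); first by rewrite -(eqP yd) -EY.
case ya: (y == a).
  move: H2; rewrite (eqP ya) in EY.
  have -> : [set a; b; c] = [set b; c; a] by apply/setP => t; rewrite !inE; bools.
  by rewrite -EY YB.
have yD : y \in Y :\: [set a; b; d] by rewrite EY !inE eqxx orbT /= ya (negbTE yb) yd.
have [z] := Bex _ _ YB H1 y yD.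
rewrite EY !inE => /andP [/norP [/norP [zb zc] zy]].
have E : [set b; c; y] :\ y :|: [set z] = [set b; c; z].
  apply/setP => t; rewrite !inE.
  case tz: (t == z); first by rewrite !orbT.
  case tb: (t == b); first by rewrite (eqP tb) eq_sym (negbTE yb).
  case tc: (t == c); first by rewrite (eqP tc) eq_sym (negbTE yc).
  by case: (t == y).
rewrite E (negbTE zb) orbF => /orP [za|zd] HB.
- move: H2; rewrite (eqP za) in HB.
  have -> : [set a; b; c] = [set b; c; a] by apply/setP => t; rewrite !inE; bools.
  by rewrite HB.
- by rewrite -(eqP zd).
Qed.

Lemma mainDJS (n : nat) (B : {set {set 'I_n}}) :
  rank3_matroid B -> no_parallel B -> DJS B.
Proof.
move=> [Bm B3] nopar w uw Hw.
have Bm' := Bm; case: Bm' => Bne Bex.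
have pair_indep : forall e f, e \in w -> f \in w -> e != f -> indep B [set e; f].
  move=> e f ew fw ef; have := nopar e f.
  by rewrite /parallel ef -!Hw ew fw /= negbK.
case/set0Pn: Bne => X XB.
have inw : forall Y, Y \in B -> forall e, e \in Y -> e \in w.
  move=> Y YB e eY; rewrite Hw /is_loop negbK; apply/existsP; exists Y.
  by rewrite YB sub1set eY.
have sw : 2 < size w.
  have : #|X| <= size w.
    apply: leq_trans (card_size w); apply: subset_leq_card.
    by apply/subsetP => e eX; apply: (inw X XB e eX).
  by rewrite B3.
have /card_gt0P [x0 _] : 0 < #|X| by rewrite B3.
have neqnth : forall i j, i < size w -> j < size w -> i != j -> nth x0 w i != nth x0 w j.
  by move=> i j iw jw ij; rewrite nth_uniq.
have HI : [exists Y in B, [set nth x0 w 0; nth x0 w 1] \subset Y].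
  have s1 : 1 < size w := ltnW sw.
  have s0 : 0 < size w := ltnW s1.
  by apply: pair_indep; rewrite ?mem_nth //; apply: neqnth.
case/existsP: HI => Y /andP [YB sY].
have aY : nth x0 w 0 \in Y by apply: (subsetP sY); rewrite !inE eqxx.
have bY : nth x0 w 1 \in Y by apply: (subsetP sY); rewrite !inE eqxx orbT.
have [e [ea eb EY]] := card3_ext (B3 _ YB) aY bY (neqnth 0 1 (ltnW (ltnW sw)) (ltnW sw) isT).
have ew : e \in w by apply: (inw Y YB); rewrite EY !inE eqxx !orbT.
pose k := index e w.
have kw : k < size w by rewrite index_mem.
have ek : nth x0 w k = e by rewrite nth_index.
have k2 : 1 < k.
  case kE: k => [|[|k']] //.
  - by move: ea; rewrite -ek kE eqxx.
  - by move: eb; rewrite -ek kE eqxx.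
apply: NNPP => Hno.
have Hno' : forall j, j.+2 < size w ->
    [set nth x0 w j; nth x0 w j.+1; nth x0 w j.+2] \notin B.
  move=> j jw; apply/negP => HB; apply: Hno; exists j => //.
  by apply/existsP; exists x0.
have claim : forall j, j.+2 <= k -> [set nth x0 w j; nth x0 w j.+1; e] \in B.
  elim => [|j IH] jk; first by rewrite -EY.
  have jk' : j.+2 <= k by apply: ltnW.
  have h2 : j.+2 < size w := ltn_trans jk kw.
  have h1 : j.+1 < size w := ltnW h2.
  apply: (keyK Bm B3 (IH jk')).
  - exact: Hno'.
  - apply: pair_indep.
    + by apply: mem_nth.
    + by apply: mem_nth.
    + apply: (neqnth _ _ h1 h2); by rewrite (ltn_eqF (ltnSn _)).
  - apply: (neqnth _ _ h1 h2); by rewrite (ltn_eqF (ltnSn _)).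
have := claim k.-2.
have -> : k.-2.+2 = k by case: k k2 {kw ek claim} => [|[|k']].
move=> /(_ (leqnn k)).
have -> : k.-2.+1 = k.-1 by case: k k2 {kw ek claim} => [|[|k']].
apply/negP.
have := Hno' k.-2.
have -> : k.-2.+2 = k by case: k k2 {kw ek claim} => [|[|k']].
have -> : k.-2.+1 = k.-1 by case: k k2 {kw ek claim} => [|[|k']].
by rewrite ek; apply.
Qed.

Theorem proposition6p6 :
  (forall (n : nat) (B : {set {set 'I_n}}),
     rank3_matroid B -> no_parallel B -> DJS B) /\
  (forall (n : nat) (B : {set {set 'I_n}}),
     rank3_matroid B -> simple_matroid B -> DJS B).
Proof.
split => n B HB; first exact: mainDJS.
by move=> [_ np]; exact: mainDJS.
Qed.
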